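(* For any residuated semigroup $\mathbf A$ the following are equivalent: (1) $\mathbf A$ is balanced; (2) $\mathbf A$ satisfies $x\backslash x= x/x$, $y\le (x/x)y$ and $y\le y(x\backslash x)$ for all $x,y$; (3) $\mathbf A$ satisfies $(x\backslash x)y=y(x\backslash x)$ and $y\le y(x\backslash x)$ for all $x,y$; (4) $\mathbf A$ satisfies $(x/x)y=y(x/x)$ and $y\le (x/x)y$ for all $x,y$.
   Context: A residuated semigroup is a structure $\langle A,\le,\cdot,\backslash,/\rangle$ where $\langle A,\le\rangle$ is a poset, $\langle A,\cdot\rangle$ is a semigroup (we write $xy$ for $x\cdot y$), and for all $x,y,z$: $xy\le z\iff x\le z/y\iff y\le x\backslash z$. An element $p$ is positive if $a\le pa$ and $a\le ap$ for all $a\in A$. Self-residuals are elements of the form $a\backslash a$ or $a/a$. A residuated semigroup is balanced if it satisfies $x\backslash x=x/x$ for all $x$ and all its self-residuals are positive. *)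

(* Defs.v *)
Record residuated_semigroup (A : Type) (le : A -> A -> Prop)
    (mul ldiv rdiv : A -> A -> A) : Prop := {
  rs_refl : forall x, le x x;
  rs_antisym : forall x y, le x y -> le y x -> x = y;
  rs_trans : forall x y z, le x y -> le y z -> le x z;
  rs_assoc : forall x y z, mul (mul x y) z = mul x (mul y z);
  (* xy <= z  <->  x <= z/y  <->  y <= x\z ;  ldiv x z = x\z, rdiv z y = z/y *)
  rs_res_r : forall x y z, le (mul x y) z <-> le x (rdiv z y);
  rs_res_l : forall x y z, le (mul x y) z <-> le y (ldiv x z)
}.

Definition positive {A : Type} (le : A -> A -> Prop) (mul : A -> A -> A)
    (p : A) : Prop :=
  forall a, le a (mul p a) /\ le a (mul a p).

Definition self_residual {A : Type} (ldiv rdiv : A -> A -> A) (p : A) : Prop :=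
  exists a, p = ldiv a a \/ p = rdiv a a.

Definition balanced {A : Type} (le : A -> A -> Prop)
    (mul ldiv rdiv : A -> A -> A) : Prop :=
  (forall x, ldiv x x = rdiv x x) /\
  (forall p, self_residual ldiv rdiv p -> positive le mul p).

(* Main.v *)
Require Import Defs.
From Stdlib Require Import Setoid.

Section S.
Variables (A : Type) (le : A -> A -> Prop) (mul ldiv rdiv : A -> A -> A).
Hypothesis HA : residuated_semigroup A le mul ldiv rdiv.

Lemma tr x y z : le x y -> le y z -> le x z.
Proof. apply (rs_trans _ _ _ _ _ HA). Qed.
Lemma rf x : le x x.
Proof. apply (rs_refl _ _ _ _ _ HA). Qed.
Lemma asy x y : le x y -> le y x -> x = y.
Proof. apply (rs_antisym _ _ _ _ _ HA). Qed.
Lemma asc x y z : mul (mul x y) z = mul x (mul y z).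
Proof. apply (rs_assoc _ _ _ _ _ HA). Qed.
Lemma rr x y z : le (mul x y) z <-> le x (rdiv z y).
Proof. apply (rs_res_r _ _ _ _ _ HA). Qed.
Lemma rl x y z : le (mul x y) z <-> le y (ldiv x z).
Proof. apply (rs_res_l _ _ _ _ _ HA). Qed.

Lemma mono_l a b c : le a b -> le (mul c a) (mul c b).
Proof. intro H. apply rl. apply (tr _ _ _ H). apply rl, rf. Qed.
Lemma mono_r a b c : le a b -> le (mul a c) (mul b c).
Proof. intro H. apply rr. apply (tr _ _ _ H). apply rr, rf. Qed.

Lemma lunit x : le (mul x (ldiv x x)) x.
Proof. apply rl, rf. Qed.
Lemma runit x : le (mul (rdiv x x) x) x.
Proof. apply rr, rf. Qed.

Lemma lidem x : le (mul (ldiv x x) (ldiv x x)) (ldiv x x).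
Proof. apply (proj1 (rl _ _ _)). rewrite <- asc. apply (tr _ (mul x (ldiv x x))).
  apply mono_r, lunit. apply lunit. Qed.
Lemma ridem x : le (mul (rdiv x x) (rdiv x x)) (rdiv x x).
Proof. apply (proj1 (rr _ _ _)). rewrite asc. apply (tr _ (mul (rdiv x x) x)).
  apply mono_l, runit. apply runit. Qed.

Lemma comm_gen e (Hpos : forall y, le y (mul e y) /\ le y (mul y e))
  (Hee : le (mul e e) e)
  (Hsym : forall z, le (mul z e) z <-> le (mul e z) z) :
  forall y, mul e y = mul y e.
Proof.
  intro y. apply asy.
  - apply (tr _ (mul (mul e y) e)). apply Hpos.
    rewrite asc. apply Hsym. rewrite asc. apply mono_l, Hee.
  - apply (tr _ (mul e (mul y e))). apply Hpos.
    rewrite <- asc. apply Hsym. rewrite <- asc. apply mono_r, Hee.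
Qed.

Lemma bal_sym (Hb : forall x, ldiv x x = rdiv x x) e z :
  le (mul z e) z <-> le (mul e z) z.
Proof. split; intro H.
  - apply (proj2 (rr _ _ _)). rewrite <- Hb. apply (proj1 (rl _ _ _)). exact H.
  - apply (proj2 (rl _ _ _)). rewrite Hb. apply (proj1 (rr _ _ _)). exact H.
Qed.

Lemma bal_pos_l (Hb : balanced le mul ldiv rdiv) x : positive le mul (ldiv x x).
Proof. apply (proj2 Hb). exists x; auto. Qed.
Lemma bal_pos_r (Hb : balanced le mul ldiv rdiv) x : positive le mul (rdiv x x).
Proof. apply (proj2 Hb). exists x; auto. Qed.

Lemma from2 (H : forall x y, ldiv x x = rdiv x x /\ le y (mul (rdiv x x) y)
                  /\ le y (mul y (ldiv x x))) : balanced le mul ldiv rdiv.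
Proof.
  split. intro x; apply (H x x).
  intros p [a [-> | ->]] y; destruct (H a y) as [E [H1 H2]].
  - rewrite E in *. auto.
  - rewrite E in H2. auto.
Qed.

Lemma from3 (H : forall x y, mul (ldiv x x) y = mul y (ldiv x x)
                  /\ le y (mul y (ldiv x x))) : balanced le mul ldiv rdiv.
Proof.
  assert (Hp : forall x y, le y (mul (ldiv x x) y) /\ le y (mul y (ldiv x x))).
  { intros x y; destruct (H x y) as [E H1]; rewrite E; auto. }
  assert (Hef : forall x, le (ldiv x x) (rdiv x x)).
  { intro x. apply rr. rewrite (proj1 (H x x)). apply lunit. }
  assert (Hfp : forall x y, le y (mul (rdiv x x) y) /\ le y (mul y (rdiv x x))).
  { intros x y. split.
    - apply (tr _ _ _ (proj1 (Hp x y))). apply mono_r, Hef.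
    - apply (tr _ _ _ (proj2 (Hp x y))). apply mono_l, Hef. }
  assert (Hfe : forall x, le (rdiv x x) (ldiv x x)).
  { intro x. set (f := rdiv x x). set (g := ldiv f f).
    assert (Hfx : mul f x = x).
    { apply asy. apply runit. apply Hfp. }
    assert (Hfg : le f g). { apply (proj1 (rl _ _ _)). apply ridem. }
    assert (Hgf : le g f).
    { apply (proj1 (rr _ _ _)).
      assert (E1 : mul g x = mul (mul f g) x).
      { replace (mul g x) with (mul g (mul f x)) by (rewrite Hfx; reflexivity).
        rewrite <- asc. unfold g. rewrite (proj1 (H f f)). reflexivity. }
      rewrite E1. apply (tr _ (mul f x)). apply mono_r. apply lunit.
      rewrite Hfx. apply rf. }
    assert (Efg : f = g) by (apply asy; auto).
    apply (proj1 (rl _ _ _)). rewrite Efg. unfold g.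
    rewrite <- (proj1 (H f x)). fold g. rewrite <- Efg.
    apply runit. }
  assert (Hb : forall x, ldiv x x = rdiv x x) by (intro; apply asy; auto).
  split. exact Hb.
  intros p [a [-> | ->]]; [exact (Hp a) | exact (Hfp a)].
Qed.

Lemma from4 (H : forall x y, mul (rdiv x x) y = mul y (rdiv x x)
                  /\ le y (mul (rdiv x x) y)) : balanced le mul ldiv rdiv.
Proof.
  assert (Hp : forall x y, le y (mul (rdiv x x) y) /\ le y (mul y (rdiv x x))).
  { intros x y; destruct (H x y) as [E H1]; rewrite <- E; auto. }
  assert (Hfe : forall x, le (rdiv x x) (ldiv x x)).
  { intro x. apply rl. rewrite <- (proj1 (H x x)). apply runit. }
  assert (Hep : forall x y, le y (mul (ldiv x x) y) /\ le y (mul y (ldiv x x))).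
  { intros x y. split.
    - apply (tr _ _ _ (proj1 (Hp x y))). apply mono_r, Hfe.
    - apply (tr _ _ _ (proj2 (Hp x y))). apply mono_l, Hfe. }
  assert (Hef : forall x, le (ldiv x x) (rdiv x x)).
  { intro x. set (e := ldiv x x). set (g := rdiv e e).
    assert (Hxe : mul x e = x).
    { apply asy. apply lunit. apply Hep. }
    assert (Heg : le e g). { apply (proj1 (rr _ _ _)). apply lidem. }
    assert (Hge : le g e).
    { apply (proj1 (rl _ _ _)).
      assert (E1 : mul x g = mul x (mul g e)).
      { replace (mul x g) with (mul (mul x e) g) by (rewrite Hxe; reflexivity).
        rewrite asc. unfold g. rewrite (proj1 (H e e)). reflexivity. }
      rewrite E1. apply (tr _ (mul x e)). apply mono_l. apply runit.
      rewrite Hxe. apply rf. }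
    assert (Eeg : e = g) by (apply asy; auto).
    apply (proj1 (rr _ _ _)). rewrite Eeg. unfold g.
    rewrite (proj1 (H e x)). fold g. rewrite <- Eeg.
    apply lunit. }
  assert (Hb : forall x, ldiv x x = rdiv x x) by (intro; apply asy; auto).
  split. exact Hb.
  intros p [a [-> | ->]]; [exact (Hep a) | exact (Hp a)].
Qed.

Lemma bal_comm (Hb : balanced le mul ldiv rdiv) x y :
  mul (ldiv x x) y = mul y (ldiv x x).
Proof.
  apply comm_gen. apply (bal_pos_l Hb). apply lidem.
  apply bal_sym, (proj1 Hb).
Qed.

End S.

Theorem proposition3p2 (A : Type) (le : A -> A -> Prop)
    (mul ldiv rdiv : A -> A -> A)
    (HA : residuated_semigroup A le mul ldiv rdiv) :
  (balanced le mul ldiv rdiv <->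
     (forall x y, ldiv x x = rdiv x x /\ le y (mul (rdiv x x) y)
                  /\ le y (mul y (ldiv x x)))) /\
  (balanced le mul ldiv rdiv <->
     (forall x y, mul (ldiv x x) y = mul y (ldiv x x)
                  /\ le y (mul y (ldiv x x)))) /\
  (balanced le mul ldiv rdiv <->
     (forall x y, mul (rdiv x x) y = mul y (rdiv x x)
                  /\ le y (mul (rdiv x x) y))).
Proof.
  split; [|split]; split.
  - intros Hb x y. split. apply (proj1 Hb). split.
    apply (bal_pos_r _ _ _ _ _ Hb). apply (bal_pos_l _ _ _ _ _ Hb).
  - intro H; apply (from2 _ _ _ _ _ H).
  - intros Hb x y. split. apply (bal_comm _ _ _ _ _ HA Hb). apply (bal_pos_l _ _ _ _ _ Hb).
  - intro H; apply (from3 _ _ _ _ _ HA H).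
  - intros Hb x y. rewrite <- (proj1 Hb). split. apply (bal_comm _ _ _ _ _ HA Hb).
    apply (bal_pos_l _ _ _ _ _ Hb).
  - intro H; apply (from4 _ _ _ _ _ HA H).
Qed.
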